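(* For every integer $n\ge1$, \[ \frac{1}{n+1}\sum_{j=0}^{n}\sum_{i=0}^{j}\frac{\binom{3n+2}{i}}{\binom{2n+1}{j}}=2^{n}\left(\frac34+\sum_{k=1}^{n-1}\frac{1}{2^{k}k}\left(1-\frac{5k+12}{8k+12}\,\frac{\binom{3k+2}{k}}{\binom{2k+1}{k}}\right)\right). \]
   Context: Empty sums are $0$. *)

(* Defs.v *)
From HB Require Import structures.
From mathcomp Require Import all_boot all_order all_algebra.

(* Main.v *)
Require Import Defs.
From HB Require Import structures.
From mathcomp Require Import all_boot all_order all_algebra.
From mathcomp Require Import zify ring lra.
Import Order.TTheory GRing.Theory Num.Theory.
Local Open Scope ring_scope.

Ltac nzs := repeat (apply/andP; split); try assumption; try (apply: lt0r_neq0; lra).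

Definition Pp (N j : nat) : rat := \sum_(0 <= i < j.+1) ('C(N,i))%:R.
Definition Dd (N m n : nat) : rat := \sum_(0 <= j < n.+1) Pp N j / ('C(m,j))%:R.
Definition Ss (N m t : nat) : rat := \sum_(0 <= j < t) ('C(N,j))%:R / ('C(m,j))%:R.

Lemma natq0 (k : nat) : (0 < k)%N -> (k%:R : rat) != 0.
Proof. by move=> h; rewrite pnatr_eq0 -lt0n. Qed.

Lemma natq (x p q y : nat) : (x * p = q * y)%N -> (0 < p)%N ->
  (x%:R : rat) = q%:R * y%:R / p%:R.
Proof.
move=> h hp.
rewrite -[LHS](mulfK (@natq0 p hp)). by rewrite -(natrM _ x p) h natrM.
Qed.

Lemma PpS N j : Pp N j.+1 = Pp N j + ('C(N, j.+1))%:R.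
Proof. by rewrite /Pp big_nat_recr. Qed.

Lemma Pp0 N : Pp N 0 = 1.
Proof. by rewrite /Pp big_nat1 bin0. Qed.

Lemma Pp_next N j : Pp N.+1 j = 2 * Pp N j - ('C(N, j))%:R.
Proof.
elim: j => [|j IH]; first by rewrite !Pp0 !bin0; lra.
by rewrite !PpS IH binS natrD; ring.
Qed.

Lemma DdS N m n : Dd N m n.+1 = Dd N m n + Pp N n.+1 / ('C(m, n.+1))%:R.
Proof. by rewrite /Dd big_nat_recr. Qed.

Lemma Dd0 N m : Dd N m 0 = 1.
Proof. by rewrite /Dd big_nat1 Pp0 bin0 divr1. Qed.

Lemma Qid m j : (j <= m)%N ->
  ('C(m, j)%:R : rat)^-1 * (m.+2)%:R =
  (m.+1)%:R * (('C(m.+1, j))%:R^-1 + ('C(m.+1, j.+1))%:R^-1).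
Proof.
move=> hj.
have c0 : ('C(m, j)%:R : rat) != 0 by apply: natq0; rewrite bin_gt0.
have h1 := mul_bin_down m.+1 j.
have h2 := mul_bin_diag m.+1 j.
simpl in h1, h2.
have e1 : ('C(m.+1, j)%:R : rat) = (m.+1)%:R * ('C(m,j))%:R / (m.+1 - j)%:R.
  by apply: natq; [rewrite mulnC h1 | lia].
have e2 : ('C(m.+1, j.+1)%:R : rat) = (m.+1)%:R * ('C(m,j))%:R / (j.+1)%:R.
  by apply: natq; [rewrite mulnC -h2 | lia].
rewrite e1 e2 natrB; last by lia.
have : ((m.+1)%:R - j%:R : rat) != 0.
  by rewrite -natrB ?natq0 //; lia.
move=> hne.
have := ler0n rat j; have := ler0n rat m; have : (j%:R : rat) <= m%:R by rewrite ler_nat.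
move=> *; field; nzs.
Qed.

Lemma L1 N m n : (n <= m)%N ->
  Dd N m n * (m.+2)%:R = (m.+1)%:R * (Dd N.+1 m.+1 n + Pp N n / ('C(m.+1, n.+1))%:R).
Proof.
elim: n => [|n IH] hn.
  rewrite !Dd0 Pp0 bin1.
  have := ler0n rat m => ?.
  field; nzs.
rewrite !DdS mulrDl IH; last by lia.
have eP : Pp N.+1 n.+1 = Pp N n.+1 + Pp N n by rewrite Pp_next PpS; ring.
rewrite eP -mulrA Qid //.
ring.
Qed.

Lemma L2 N m n : Dd N.+1 m n = 2 * Dd N m n - Ss N m n.+1.
Proof.
elim: n => [|n IH].
  by rewrite !Dd0 /Ss big_nat1 !bin0; field.
rewrite !DdS IH /Ss [in RHS]big_nat_recr //= Pp_next.
ring.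
Qed.

Lemma binf a b : ('C(a + b, a)%:R : rat) = (a + b)`!%:R / (a`!%:R * b`!%:R).
Proof.
have h := bin_fact (leq_addr b a).
rewrite addKn in h.
have hp : (0 < a`! * b`!)%N by rewrite muln_gt0 !fact_gt0.
have e := @natq ('C(a+b,a)) (a`! * b`!) ((a+b)`!) 1.
by rewrite e ?muln1 // natrM mulr1.
Qed.

Lemma stepEq t u l :
  ('C(t+u+l+2, t)%:R : rat) / ('C(t+u,t))%:R =
  ('C(t+u+l+2, t+u))%:R * (l.+2)%:R/(l.+1)%:R *
    (('C(u+l+1, l.+1))%:R^-1 - ('C(u+l+2, l.+1))%:R^-1).
Proof.
have b1 : ('C(t+u+l+2, t)%:R : rat) = (t+u+l+2)`!%:R / (t`!%:R * (u+l+2)`!%:R).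
  by rewrite (_ : (t+u+l+2 = t+(u+l+2))%N) ?binf //; lia.
have b2 : ('C(t+u, t)%:R : rat) = (t+u)`!%:R / (t`!%:R * u`!%:R) by rewrite binf.
have b3 : ('C(t+u+l+2, t+u)%:R : rat) = (t+u+l+2)`!%:R / ((t+u)`!%:R * (l.+2)`!%:R).
  by rewrite (_ : (t+u+l+2 = (t+u)+l.+2)%N) ?binf //; lia.
have b4 : ('C(u+l+1, l.+1)%:R : rat) = (u+l+1)`!%:R / ((l.+1)`!%:R * u`!%:R).
  by rewrite (_ : (u+l+1 = l.+1+u)%N) ?binf //; lia.
have b5 : ('C(u+l+2, l.+1)%:R : rat) = (u+l+1).+1`!%:R / ((l.+1)`!%:R * u.+1`!%:R).
  by rewrite (_ : (u+l+2 = l.+1+u.+1)%N) ?binf //; [rewrite (_ : ((u+l+1).+1 = l.+1+u.+1)%N) //|]; lia.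
rewrite b1 b2 b3 b4 b5 (_ : (u+l+2 = (u+l+1).+1)%N); last by lia.
rewrite !factS !natrM.
have f1 : ((t+u+l+2)`!%:R : rat) != 0 by apply: natq0; apply: fact_gt0.
have f2 : (t`!%:R : rat) != 0 by apply: natq0; apply: fact_gt0.
have f3 : ((t+u)`!%:R : rat) != 0 by apply: natq0; apply: fact_gt0.
have f4 : (u`!%:R : rat) != 0 by apply: natq0; apply: fact_gt0.
have f5 : ((u+l+1)`!%:R : rat) != 0 by apply: natq0; apply: fact_gt0.
have f6 : (l`!%:R : rat) != 0 by apply: natq0; apply: fact_gt0.
have := ler0n rat u; have := ler0n rat l; have := ler0n rat t.
move=> *; field; nzs.
Qed.

Lemma Sclosed m l t : (t <= m.+1)%N ->
  Ss (m+l+2) m t = ('C(m+l+2, m))%:R * (l.+2)%:R/(l.+1)%:R *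
    (('C(m+l+2-t, l.+1))%:R^-1 - ('C(m+l+2, l.+1))%:R^-1).
Proof.
elim: t => [|t IH] ht.
  by rewrite /Ss big_geq // subn0 subrr mulr0.
have [u Em] : exists u, m = (t + u)%N by exists (m - t)%N; lia.
rewrite /Ss big_nat_recr //= -/(Ss _ _ _) IH; last by lia.
subst m.
rewrite stepEq (_ : (t+u+l+2-t = u+l+2)%N); last by lia.
rewrite (_ : (t+u+l+2-t.+1 = u+l+1)%N); last by lia.
ring.
Qed.

Lemma L1' N N1 m m1 m2 n : N1 = N.+1 -> m1 = m.+1 -> m2 = m.+2 -> (n <= m)%N ->
  Dd N m n * m2%:R = m1%:R * (Dd N1 m1 n + Pp N n / ('C(m1, n.+1))%:R).
Proof. by move=> -> -> ->; apply: L1. Qed.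

Lemma Pp_next' N N1 j : N1 = N.+1 -> Pp N1 j = 2 * Pp N j - ('C(N, j))%:R.
Proof. by move=> ->; apply: Pp_next. Qed.

Lemma L2' N N1 m n : N1 = N.+1 -> Dd N1 m n = 2 * Dd N m n - Ss N m n.+1.
Proof. by move=> ->; apply: L2. Qed.

Lemma Sclosed' N m l t A K K1 : N = (m+l+2)%N -> (t <= m.+1)%N -> A = (N - t)%N ->
  K = l.+2 -> K1 = l.+1 ->
  Ss N m t = ('C(N, m))%:R * K%:R/K1%:R * (('C(A, K1))%:R^-1 - ('C(N, K1))%:R^-1).
Proof. by move=> -> ht -> -> ->; apply: Sclosed. Qed.

Lemma solve (x y z c d : rat) : c != 0 -> x * d = c * (y + z) -> y = x * d / c - z.
Proof. by move=> hc ->; field. Qed.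

Lemma bd' X X1 Y P : X1 = X.+1 -> P = (X1 - Y)%N -> (Y <= X)%N ->
  ('C(X1, Y)%:R : rat) = X1%:R * ('C(X, Y))%:R / P%:R.
Proof.
move=> -> -> hY; apply: natq; last by lia.
by rewrite mulnC -(mul_bin_down X.+1 Y).
Qed.

Lemma bdiag' X X1 Y Y1 : X1 = X.+1 -> Y1 = Y.+1 ->
  ('C(X1, Y1)%:R : rat) = X1%:R * ('C(X, Y))%:R / Y1%:R.
Proof.
move=> -> ->; apply: natq => //.
by rewrite mulnC -(mul_bin_diag X.+1 Y).
Qed.

Lemma bleft' X Y Y1 P : Y1 = Y.+1 -> P = (X - Y)%N -> (Y < X)%N ->
  ('C(X, Y)%:R : rat) = Y1%:R * ('C(X, Y1))%:R / P%:R.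
Proof.
move=> -> -> hY; apply: natq; last by lia.
by rewrite mulnC mul_bin_left.
Qed.

Lemma recL n : (1 <= n)%N ->
  (n.+2%:R)^-1 * Dd (3 * n.+1 + 2) (2 * n.+1 + 1) n.+1 =
  2 * ((n.+1%:R)^-1 * Dd (3 * n + 2) (2 * n + 1) n) +
  2 / n%:R * (1 - ((5 * n + 12)%:R / (8 * n + 12)%:R) *
               (('C(3 * n + 2, n))%:R / ('C(2 * n + 1, n))%:R)).
Proof.
move=> hn.
have E1 := @L1' (3*n+2) (3*n+3) (2*n+1) (2*n+2) (2*n+3) n ltac:(lia) ltac:(lia) ltac:(lia) ltac:(lia).
have E2 := @L1' (3*n+3) (3*n+4) (2*n+2) (2*n+3) (2*n+4) n ltac:(lia) ltac:(lia) ltac:(lia) ltac:(lia).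
have E3 := @L2' (3*n+4) (3*n+5) (2*n+3) n ltac:(lia).
have E4 := DdS (3*n+5) (2*n+3) n.
have ES := @Sclosed' (3*n+4) (2*n+3) (n-1) n.+1 (2*n+3) n.+1 n ltac:(lia) ltac:(lia) ltac:(lia) ltac:(lia) ltac:(lia).
have P1 := @Pp_next' (3*n+2) (3*n+3) n ltac:(lia).
have P2 := @Pp_next' (3*n+3) (3*n+4) n ltac:(lia).
have P3 := @Pp_next' (3*n+4) (3*n+5) n ltac:(lia).
have P4 := PpS (3*n+5) n.
have c1 : ('C(3*n+3, n)%:R : rat) = (3*n+3)%:R * ('C(3*n+2,n))%:R / (2*n+3)%:R.
  by apply: bd'; lia.
have c2 : ('C(3*n+4, n)%:R : rat) = (3*n+4)%:R * ('C(3*n+3,n))%:R / (2*n+4)%:R.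
  by apply: bd'; lia.
have c3 : ('C(3*n+5, n.+1)%:R : rat) = (3*n+5)%:R * ('C(3*n+4,n))%:R / (n.+1)%:R.
  by apply: bdiag'; lia.
have c4a : 'C(3*n+4, 2*n+3) = 'C(3*n+4, n.+1).
  rewrite -(@bin_sub (3*n+4) n.+1); last by lia.
  by rewrite (_ : (3*n+4 - n.+1 = 2*n+3)%N) //; lia.
have c4 : ('C(3*n+4, n.+1)%:R : rat) = (3*n+4)%:R * ('C(3*n+3,n))%:R / (n.+1)%:R.
  by apply: bdiag'; lia.
have c5 : ('C(2*n+2, n.+1)%:R : rat) = (2*n+2)%:R * ('C(2*n+1,n))%:R / (n.+1)%:R.
  by apply: bdiag'; lia.
have c6 : ('C(2*n+3, n.+1)%:R : rat) = (2*n+3)%:R * ('C(2*n+2,n.+1))%:R / (n+2)%:R.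
  by apply: bd'; lia.
have c7 : ('C(2*n+3, n)%:R : rat) = (n.+1)%:R * ('C(2*n+3,n.+1))%:R / (n+3)%:R.
  by apply: bleft'; lia.
have ha : ('C(3*n+2, n)%:R : rat) != 0 by apply: natq0; rewrite bin_gt0; lia.
have hb : ('C(2*n+1, n)%:R : rat) != 0 by apply: natq0; rewrite bin_gt0; lia.
have E1s := solve _ _ _ _ _ (natq0 (2*n+2) ltac:(lia)) E1.
have E2s := solve _ _ _ _ _ (natq0 (2*n+3) ltac:(lia)) E2.
rewrite (_ : (3*n.+1+2 = 3*n+5)%N); last by lia.
rewrite (_ : (2*n.+1+1 = 2*n+3)%N); last by lia.
rewrite E4 E3 ES E2s E1s P4 P3 P2 P1 c4a c3 c4 c2 c1 c7 c6 c5.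
have : (1 : rat) <= n%:R by rewrite (ler_nat _ 1).
move=> hn1.
field; nzs.
Qed.

Lemma conv n : \sum_(0 <= j < n.+1) \sum_(0 <= i < j.+1)
        ('C(3 * n + 2, i))%:R / ('C(2 * n + 1, j))%:R = Dd (3 * n + 2) (2 * n + 1) n.
Proof. by rewrite /Dd /Pp; apply: eq_bigr => j _; rewrite mulr_suml. Qed.

Theorem mainTheorem10 (n : nat) (hn : (1 <= n)%N) :
  (n.+1%:R)^-1 *
    (\sum_(0 <= j < n.+1) \sum_(0 <= i < j.+1)
        ('C(3 * n + 2, i))%:R / ('C(2 * n + 1, j))%:R : rat)
  = 2 ^+ n *
    (3 / 4 + \sum_(1 <= k < n)
        ((2 ^+ k * k%:R)^-1 *
          (1 - ((5 * k + 12)%:R / (8 * k + 12)%:R) *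
               (('C(3 * k + 2, k))%:R / ('C(2 * k + 1, k))%:R)))).
Proof.
elim: n hn => [//|n IH] hn.
rewrite conv.
case: n IH hn => [|n] IH hn.
  rewrite big_geq // DdS Dd0 PpS Pp0 !bin1.
  by field.
rewrite recL // -conv IH // [in RHS]big_nat_recr //= [in RHS]exprS.
have : (1 : rat) <= n.+1%:R by rewrite (ler_nat _ 1).
move=> hn1.
have h2 : (2 : rat) ^+ n.+1 != 0 by rewrite expf_neq0.
have hb : ('C(2*n.+1+1, n.+1)%:R : rat) != 0 by apply: natq0; rewrite bin_gt0; lia.
have := ler0n rat n => ?.
field; nzs.
Qed.
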